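(* Let $k$ be a field, $A$ and $B$ $k$-algebras, $X$ an $(A,B)$-bimodule on which $k$ acts centrally and which is finitely generated as a left $A$-module and as a right $B$-module, and $\Lambda=\begin{pmatrix}A&X\\0&B\end{pmatrix}$ with $P_1=[A\ X]$, $P_2=[0\ B]$. For $s,t\ge0$ and $x\in M_{s,t}(X)$ let $P_x$ be the 2-term complex $P_2^{\oplus t}\xrightarrow{x(\cdot)}P_1^{\oplus s}$ (degrees $-1,0$) in $K^b(\operatorname{proj}\Lambda)$. Let $s,t,u,v\ge0$, $x\in M_{s,t}(X)$, $y\in M_{u,v}(X)$. (a) There is an exact sequence $M_{u,s}(A)\oplus M_{v,t}(B)\to M_{u,t}(X)\to\operatorname{Hom}_{K^b(\operatorname{proj}\Lambda)}(P_x,P_y[1])\to0$, where the first map is $(a,b)\mapsto ax+yb$. (b) In particular, $P_x$ is presilting if and only if $M_{s,t}(X)=M_s(A)x+xM_t(B)$.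
   Context: $M_{s,t}(X)$ denotes $s\times t$ matrices with entries in $X$; $\operatorname{Hom}_\Lambda(P_2^{\oplus t},P_1^{\oplus s})\cong M_{s,t}(X)$ via left multiplication. A complex $T$ is presilting if $\operatorname{Hom}(T,T[\ell])=0$ for all $\ell>0$. *)

(* Defs.v *)
From HB Require Import structures.
From mathcomp Require Import all_boot all_order all_algebra.
Set Implicit Arguments. Unset Strict Implicit. Unset Printing Implicit Defensive.
Import Order.TTheory GRing.Theory Num.Theory.
Local Open Scope ring_scope.

Definition bimodule_axioms (A B : nzRingType) (X : zmodType)
  (la : A -> X -> X) (ra : X -> B -> X) : Prop :=
  [/\ (forall a x y, la a (x + y) = la a x + la a y),
      (forall a a' x, la (a + a') x = la a x + la a' x),
      (forall x, la 1 x = x) &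
      (forall a a' x, la (a * a') x = la a (la a' x))] /\
  [/\ (forall b x y, ra (x + y) b = ra x b + ra y b),
      (forall b b' x, ra x (b + b') = ra x b + ra x b'),
      (forall x, ra x 1 = x) &
      (forall b b' x, ra x (b * b') = ra (ra x b) b')] /\
  (forall a b x, la a (ra x b) = ra (la a x) b).

Definition k_central (k : nzRingType) (A B : algType k) (X : zmodType)
  (la : A -> X -> X) (ra : X -> B -> X) : Prop :=
  forall (c : k) (x : X), la (c%:A) x = ra x (c%:A).

Definition fg_left (A : nzRingType) (X : zmodType) (la : A -> X -> X) : Prop :=
  exists gs : seq X, forall x : X, exists cs : seq A,
    size cs = size gs /\ x = \sum_(i < size gs) la (nth 0 cs i) (nth 0 gs i).

Definition fg_right (B : nzRingType) (X : zmodType) (ra : X -> B -> X) : Prop :=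
  exists gs : seq X, forall x : X, exists cs : seq B,
    size cs = size gs /\ x = \sum_(i < size gs) ra (nth 0 gs i) (nth 0 cs i).

Section Triangular.
Variables (A B : nzRingType) (X : zmodType) (la : A -> X -> X) (ra : X -> B -> X).

Definition mulAX m n p (a : 'M[A]_(m, n)) (x : 'M[X]_(n, p)) : 'M[X]_(m, p) :=
  \matrix_(i, j) \sum_(l < n) la (a i l) (x l j).
Definition mulXB m n p (x : 'M[X]_(m, n)) (b : 'M[B]_(n, p)) : 'M[X]_(m, p) :=
  \matrix_(i, j) \sum_(l < n) ra (x i l) (b l j).

(* Objects of add(P_1 (+) P_2) in proj Lambda, Lambda = [[A, X], [0, B]]:
   the pair (a, b) stands for P_1^{(+)a} (+) P_2^{(+)b}.
   A Lambda-linear map P_1^a (+) P_2^b -> P_1^c (+) P_2^d is left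
   multiplication by a block matrix [[hA, hX], [0, hB]] with
   hA in M_{c,a}(A), hX in M_{c,b}(X), hB in M_{d,b}(B)
   (Hom(P_1,P_1) = A, Hom(P_2,P_1) = X, Hom(P_2,P_2) = B, Hom(P_1,P_2) = 0). *)
Record thom (p q : nat * nat) := THom {
  hA : 'M[A]_(q.1, p.1);
  hX : 'M[X]_(q.1, p.2);
  hB : 'M[B]_(q.2, p.2) }.

Definition homcomp p q r (g : thom q r) (f : thom p q) : thom p r :=
  THom (hA g *m hA f) (mulAX (hA g) (hX f) + mulXB (hX g) (hB f)) (hB g *m hB f).
Definition homadd p q (f g : thom p q) : thom p q :=
  THom (hA f + hA g) (hX f + hX g) (hB f + hB g).
Definition homopp p q (f : thom p q) : thom p q :=
  THom (- hA f) (- hX f) (- hB f).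
Definition homsub p q (f g : thom p q) : thom p q := homadd f (homopp g).

Record cplx := Cplx {
  cobj : int -> nat * nat;
  cd : forall i : int, thom (cobj i) (cobj (i + 1)) }.

Definition shift (F : cplx) : cplx :=
  @Cplx (fun i => cobj F (i + 1)) (fun i => homopp (cd F (i + 1))).

Definition is_chain (F G : cplx) (f : forall i, thom (cobj F i) (cobj G i)) : Prop :=
  forall i : int, homcomp (cd G i) (f i) = homcomp (f (i + 1)) (cd F i).

Definition nullhtpy (F G : cplx) (f : forall i, thom (cobj F i) (cobj G i)) : Prop :=
  exists h : forall i : int, thom (cobj F (i + 1)) (cobj G i),
    forall i : int,
      f (i + 1) = homadd (homcomp (cd G i) (h i)) (homcomp (h (i + 1)) (cd F (i + 1))).

Definition presilting (T : cplx) : Prop :=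
  forall l : nat, (0 < l)%N ->
    forall f : forall i, thom (cobj T i) (cobj (iter l shift T) i),
      is_chain f -> nullhtpy f.

Definition mxget m n (x : 'M[X]_(m, n)) (r c : nat) : X :=
  match insub r, insub c with
  | Some r', Some c' => x r' c'
  | _, _ => 0
  end.

Definition Pobj (s t : nat) (i : int) : nat * nat :=
  if i == 0 then (s, 0%N) else if i == -1 then (0%N, t) else (0%N, 0%N).

Definition Pcx (s t : nat) (x : 'M[X]_(s, t)) : cplx :=
  @Cplx (Pobj s t) (fun i =>
    THom 0 (\matrix_(r, c) (if i == -1 then mxget x r c else 0)) 0).

End Triangular.

(* Main.v *)
Require Import Defs.
From HB Require Import structures.
From mathcomp Require Import all_boot all_order all_algebra.
From mathcomp Require Import zify.
Import GRing.Theory.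
Local Open Scope ring_scope.
Module Helpers.
Set Implicit Arguments. Unset Strict Implicit.

Section Help.
Variables (A B : nzRingType) (X : zmodType) (la : A -> X -> X) (ra : X -> B -> X).
Hypothesis hbim : bimodule_axioms la ra.

Lemma laDr a x y : la a (x + y) = la a x + la a y.
Proof. by case: hbim => [[]]. Qed.
Lemma laDl a a' x : la (a + a') x = la a x + la a' x.
Proof. by case: hbim => [[]]. Qed.
Lemma raDl b x y : ra (x + y) b = ra x b + ra y b.
Proof. by case: hbim => [_ [[]]]. Qed.
Lemma raDr b b' x : ra x (b + b') = ra x b + ra x b'.
Proof. by case: hbim => [_ [[]]]. Qed.

Lemma idem0 (z : X) : z = z + z -> z = 0.
Proof. by move=> h; apply: (addrI z); rewrite addr0 -h. Qed.
Lemma la0x x : la 0 x = 0.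
Proof. by apply: idem0; rewrite -laDl addr0. Qed.
Lemma lax0 a : la a 0 = 0.
Proof. by apply: idem0; rewrite -laDr addr0. Qed.
Lemma ra0x b : ra 0 b = 0.
Proof. by apply: idem0; rewrite -raDl addr0. Qed.
Lemma rax0 x : ra x 0 = 0.
Proof. by apply: idem0; rewrite -raDr addr0. Qed.
Lemma raNN x b : ra (- x) (- b) = ra x b.
Proof.
have h1 : ra (- x) (- b) + ra x (- b) = 0 by rewrite -raDl addNr ra0x.
have h2 : ra x (- b) + ra x b = 0 by rewrite -raDr addNr rax0.
by apply: (addIr (ra x (- b))); rewrite h1 addrC h2.
Qed.

Lemma mulA0X m n p (M : 'M[X]_(n, p)) : mulAX la (0 : 'M[A]_(m, n)) M = 0.
Proof. by apply/matrixP => i j; rewrite !mxE big1 // => l _; rewrite mxE la0x. Qed.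
Lemma mulAX0 m n p (a : 'M[A]_(m, n)) : mulAX la a (0 : 'M[X]_(n, p)) = 0.
Proof. by apply/matrixP => i j; rewrite !mxE big1 // => l _; rewrite mxE lax0. Qed.
Lemma mulX0B m n p (b : 'M[B]_(n, p)) : mulXB ra (0 : 'M[X]_(m, n)) b = 0.
Proof. by apply/matrixP => i j; rewrite !mxE big1 // => l _; rewrite mxE ra0x. Qed.
Lemma mulXB0 m n p (M : 'M[X]_(m, n)) : mulXB ra M (0 : 'M[B]_(n, p)) = 0.
Proof. by apply/matrixP => i j; rewrite !mxE big1 // => l _; rewrite mxE rax0. Qed.

Lemma mulAXDl m n p (a a' : 'M[A]_(m, n)) (M : 'M[X]_(n, p)) :
  mulAX la (a + a') M = mulAX la a M + mulAX la a' M.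
Proof.
apply/matrixP => i j; rewrite !mxE -big_split /=; apply: eq_bigr => l _.
by rewrite mxE laDl.
Qed.
Lemma mulAXDr m n p (a : 'M[A]_(m, n)) (M M' : 'M[X]_(n, p)) :
  mulAX la a (M + M') = mulAX la a M + mulAX la a M'.
Proof.
apply/matrixP => i j; rewrite !mxE -big_split /=; apply: eq_bigr => l _.
by rewrite mxE laDr.
Qed.
Lemma mulXBDl m n p (M M' : 'M[X]_(m, n)) (b : 'M[B]_(n, p)) :
  mulXB ra (M + M') b = mulXB ra M b + mulXB ra M' b.
Proof.
apply/matrixP => i j; rewrite !mxE -big_split /=; apply: eq_bigr => l _.
by rewrite mxE raDl.
Qed.
Lemma mulXBDr m n p (M : 'M[X]_(m, n)) (b b' : 'M[B]_(n, p)) :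
  mulXB ra M (b + b') = mulXB ra M b + mulXB ra M b'.
Proof.
apply/matrixP => i j; rewrite !mxE -big_split /=; apply: eq_bigr => l _.
by rewrite mxE raDr.
Qed.

Lemma thom_eq p q (f g : thom A B X p q) :
  hA f = hA g -> hX f = hX g -> hB f = hB g -> f = g.
Proof. by case: f => ? ? ?; case: g => ? ? ? /= -> -> ->. Qed.

Lemma mx_dim0 (T : Type) m n (M N : 'M[T]_(m, n)) : (m == 0)%N || (n == 0)%N -> M = N.
Proof.
move=> h; apply/matrixP => i j; case/orP: h => /eqP e.
  by have := ltn_ord i; rewrite {2}e.
by have := ltn_ord j; rewrite {2}e.
Qed.

Lemma thom_triv p q (f g : thom A B X p q) :
  [&& (q.1 == 0)%N || (p.1 == 0)%N, (q.1 == 0)%N || (p.2 == 0)%N &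
      (q.2 == 0)%N || (p.2 == 0)%N] -> f = g.
Proof. by case/and3P => h1 h2 h3; apply: thom_eq; apply: mx_dim0. Qed.

Lemma mxget_ord (T : zmodType) m n (M : 'M[T]_(m, n)) (r : 'I_m) (c : 'I_n) :
  mxget M r c = M r c.
Proof. by rewrite /mxget !valK. Qed.

Lemma mxgetE (T : zmodType) m n (M : 'M[T]_(m, n)) r c (hr : (r < m)%N) (hc : (c < n)%N) :
  mxget M r c = M (Ordinal hr) (Ordinal hc).
Proof. by rewrite -mxget_ord. Qed.

Lemma mxgetD (T : zmodType) m n (M N : 'M[T]_(m, n)) r c :
  mxget (M + N) r c = mxget M r c + mxget N r c.
Proof.
rewrite /mxget; case: insubP => [r' _ _|_]; last by rewrite addr0.
by case: insubP => [c' _ _|_]; rewrite ?mxE ?addr0.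
Qed.

Lemma mx_if0 (T : zmodType) m n (b : bool) (F : 'I_m -> 'I_n -> T) :
  ~~ b -> \matrix_(r, c) (if b then F r c else 0) = 0.
Proof. by move/negbTE=> e; apply/matrixP => r c; rewrite !mxE e. Qed.

Lemma Pobj1 s t i : (Pobj s t i).1 = if i == 0 then s else 0%N.
Proof. by rewrite /Pobj; case: (i == 0); case: (i == -1). Qed.
Lemma Pobj2 s t i : (Pobj s t i).2 = if i == -1 then t else 0%N.
Proof. rewrite /Pobj; case: eqP => [->|]; by case: (i == -1). Qed.

End Help.

Ltac dimtac := rewrite /= ?Pobj1 ?Pobj2;
  repeat match goal with |- context [if ?b then _ else _] => case: (boolP b) => ? end;
  rewrite ?eqxx ?orbT //=; try lia.

Section Main.
Variables (A B : nzRingType) (X : zmodType) (la : A -> X -> X) (ra : X -> B -> X).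
Hypothesis hbim : bimodule_axioms la ra.
Variables (s t u v : nat) (x : 'M[X]_(s, t)) (y : 'M[X]_(u, v)).

Definition phi (z : 'M[X]_(u, t)) (i : int) :
  thom A B X (cobj (Pcx A B x) i) (cobj (shift (Pcx A B y)) i) :=
  THom 0 (\matrix_(r, c) (if i == -1 then mxget z r c else 0)) 0.

Lemma chain_all f : is_chain la ra (F := Pcx A B x) (G := shift (Pcx A B y)) f.
Proof. move=> i; apply: thom_triv; dimtac. Qed.


Lemma phiD z1 z2 i : phi (z1 + z2) i = homadd (phi z1 i) (phi z2 i).
Proof.
apply: thom_eq => /=; rewrite ?addr0 //.
by apply/matrixP => r c; rewrite !mxE; case: ifP; rewrite ?mxgetD ?addr0.
Qed.

Lemma homcomp0r p q r (d : thom A B X q r) :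
  homcomp la ra d (THom 0 0 0 : thom A B X p q) = THom 0 0 0.
Proof. by rewrite /homcomp /= mulmx0 (mulAX0 hbim) (mulXB0 hbim) addr0 mulmx0. Qed.
Lemma homcomp0l p q r (d : thom A B X p q) :
  homcomp la ra (THom 0 0 0 : thom A B X q r) d = THom 0 0 0.
Proof. by rewrite /homcomp /= mul0mx (mulA0X hbim) (mulX0B hbim) addr0 mul0mx. Qed.

Lemma surj f : exists z, nullhtpy la ra (fun i => homsub (f i) (phi z i)).
Proof.
exists (\matrix_(r < u, c < t) mxget (hX (f (-2 + 1))) r c).
exists (fun i => THom 0 0 0) => i.
rewrite homcomp0r homcomp0l.
have [->|ne] := eqVneq i (-2).
  apply: thom_eq => /=.
  - by apply: mx_dim0; dimtac.
  - apply/matrixP => r c; rewrite !mxE.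
    by rewrite mxget_ord mxE mxget_ord subrr addr0.
  - by apply: mx_dim0; dimtac.
apply: thom_triv; dimtac.
Qed.


Lemma htpy_iff z : nullhtpy la ra (phi z) <->
  exists (a : 'M[A]_(u, s)) (b : 'M[B]_(v, t)), z = mulAX la a x + mulXB ra y b.
Proof.
split.
  case=> h H.
  exists (\matrix_(r < u, c < s) mxget (hA (h (-2 + 1))) r c).
  exists (\matrix_(r < v, c < t) - mxget (hB (h (-2))) r c).
  have := congr1 (@hX _ _ _ _ _) (H (-2)) => /= /matrixP H2.
  apply/matrixP => r c; have := H2 r c; rewrite !mxE /= mxget_ord => ->.
  rewrite !big_ord0 add0r addr0 addrC; congr (_ + _); apply: eq_bigr => l _.
    by rewrite !mxE !mxget_ord.
  by rewrite !mxE !mxget_ord -(raNN hbim) opprK.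
case=> a [b ->].
exists (fun i => THom (\matrix_(r, c) (if i == -1 then mxget a r c else 0)) 0
                      (\matrix_(r, c) (if i == -2 then - mxget b r c else 0))) => i.
have [->|ne] := eqVneq i (-2).
  apply: thom_eq => /=.
  - by apply: mx_dim0; dimtac.
  - apply/matrixP => r c; rewrite !mxE.
    rewrite mxget_ord !mxE !big_ord0 add0r addr0 addrC.
    congr (_ + _); apply: eq_bigr => l _; rewrite !mxE !mxget_ord //.
    by rewrite (raNN hbim).
  - by apply: mx_dim0; dimtac.
apply: thom_triv; dimtac.
Qed.

End Main.

Section Htpy.
Variables (A B : nzRingType) (X : zmodType) (la : A -> X -> X) (ra : X -> B -> X).
Hypothesis hbim : bimodule_axioms la ra.

Lemma nullhtpy_ext (F G : cplx A B X) f g :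
  (forall i, f i = g i) -> nullhtpy la ra (F := F) (G := G) f -> nullhtpy la ra g.
Proof. by move=> e [h H]; exists h => i; rewrite -e H. Qed.

Lemma nullhtpy_add (F G : cplx A B X) f g :
  nullhtpy la ra (F := F) (G := G) f -> nullhtpy la ra (F := F) (G := G) g ->
  nullhtpy la ra (F := F) (G := G) (fun i => homadd (f i) (g i)).
Proof.
case=> h1 H1 [h2 H2]; exists (fun i => homadd (h1 i) (h2 i)) => i.
rewrite H1 H2; apply: thom_eq => /=.
- by rewrite mulmxDr mulmxDl addrACA.
- rewrite (mulAXDr hbim) (mulXBDr hbim) (mulAXDl hbim) (mulXBDl hbim).
  by rewrite [LHS]addrACA [X in X + _ = _]addrACA [X in _ + X = _]addrACA.
- by rewrite mulmxDr mulmxDl addrACA.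
Qed.

Lemma cobj_iter (F : cplx A B X) l i : cobj (iter l (@shift A B X) F) i = cobj F (i + l%:Z).
Proof.
elim: l i => [|l IH] i /=; first by rewrite addr0.
by rewrite IH; congr (cobj F _); lia.
Qed.

End Htpy.

End Helpers.
Import Helpers.

Theorem proposition3p9 (k : fieldType) (A B : algType k) (X : zmodType)
  (la : A -> X -> X) (ra : X -> B -> X)
  (hbim : bimodule_axioms la ra) (hcen : k_central la ra)
  (hfgl : fg_left la) (hfgr : fg_right ra)
  (s t u v : nat) (x : 'M[X]_(s, t)) (y : 'M[X]_(u, v)) :
  (exists phi : 'M[X]_(u, t) ->
       forall i : int, thom A B X (cobj (Pcx A B x) i) (cobj (shift (Pcx A B y)) i),
     [/\ (forall z, is_chain la ra (phi z)),
         (forall z1 z2 i, phi (z1 + z2) i = homadd (phi z1 i) (phi z2 i)),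
         (forall f : forall i : int,
              thom A B X (cobj (Pcx A B x) i) (cobj (shift (Pcx A B y)) i),
            is_chain la ra f ->
            exists z, nullhtpy la ra (fun i => homsub (f i) (phi z i))) &
         (forall z, nullhtpy la ra (phi z) <->
            exists (a : 'M[A]_(u, s)) (b : 'M[B]_(v, t)),
              z = mulAX la a x + mulXB ra y b)])
  /\
  (presilting la ra (Pcx A B x) <->
     forall z : 'M[X]_(s, t),
       exists (a : 'M[A]_s) (b : 'M[B]_t), z = mulAX la a x + mulXB ra x b).
Proof.
split.
  exists (@phi A B X s t u v x y); split.
  - by move=> z; apply: chain_all.
  - exact: phiD.
  - by move=> f _; apply: (surj hbim).
  - exact: htpy_iff.
split.
  move=> HP z.
  apply/(htpy_iff hbim).
  apply: (HP 1%N erefl (@phi A B X s t s t x x z)).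
  exact: chain_all.
move=> H [|[|l]] // _ f _.
  have [z N] := surj hbim f.
  have P : nullhtpy la ra (@phi A B X s t s t x x z).
    by apply/(htpy_iff hbim); apply: H.
  apply: (nullhtpy_ext _ (nullhtpy_add hbim N P)) => i /=.
  by apply: thom_eq => /=; rewrite subrK.
exists (fun i => THom 0 0 0) => i.
apply: thom_triv; rewrite /= !cobj_iter; dimtac.
Qed.
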